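(* For every integer $m\ge 0$ and every integer $n\ge 0$, $$x^n=\sum_{k=0}^{\lfloor n/2\rfloor}\frac{n!}{k!\,(n-2k)!}\,\frac{(n+m-2k)!}{(n+m-k)!}\,(-s)^k\, l_{n-2k}(x,m,s).$$ Consequently, if $\Lambda_m$ denotes the linear functional on polynomials in $x$ (with coefficients rational functions of $s$) determined by $\Lambda_m(l_n(x,m,s))=[n=0]$ for all $n\ge 0$, then $\Lambda_m(x^{2n+1})=0$ and $$\Lambda_m(x^{2n})=(-s)^n\,\sigma(m,n)=(-s)^n\frac{(2n)!\,m!}{n!\,(m+n)!}\quad\text{for all } n\ge 0.$$
   Context: For an integer $m\ge 0$ and indeterminates $x,s$, $$l_n(x,m,s)=\sum_{k=0}^{\lfloor n/2\rfloor}\frac{n!}{k!\,(n-2k)!}\,\frac{1}{\prod_{j=1}^{k}(m+n-j)}\,s^k x^{n-2k}\qquad(n\ge 0),$$ empty products being $1$. The normalized super Catalan numbers are $\sigma(m,n)=\frac{(2n)!\,m!}{n!\,(n+m)!}$. $[P]$ is the Iverson bracket. *)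

(* Defs.v *)
From HB Require Import structures.
From mathcomp Require Import all_boot all_order all_algebra.
Set Implicit Arguments. Unset Strict Implicit. Unset Printing Implicit Defensive.
Import Order.TTheory GRing.Theory Num.Theory.
Local Open Scope ring_scope.

Definition lpoly (F : fieldType) (m n : nat) (s : F) : {poly F} :=
  \sum_(k < n./2.+1)
     (((n`!)%:R / ((k`! * (n - 2 * k)`!)%:R))
        / (\prod_(1 <= j < k.+1) ((m + n - j)%:R : F))
        * s ^+ k) *: 'X^(n - 2 * k).

Definition sigmaSC (F : fieldType) (m n : nat) : F :=
  ((2 * n)`! * m`!)%:R / ((n`! * (n + m)`!)%:R).

(* Main.v *)
Require Import Defs.
From HB Require Import structures.
From mathcomp Require Import all_boot all_order all_algebra.
From mathcomp Require Import ring zify.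
Import Order.TTheory GRing.Theory Num.Theory.
Local Open Scope ring_scope.

Definition bet (F : fieldType) (n m k : nat) : F :=
  ((n`!)%:R / ((k`! * (n - 2 * k)`!)%:R)) * (((n + m - 2 * k)`!)%:R / ((n + m - k)`!)%:R).
Definition alp (F : fieldType) (m N i : nat) : F :=
  ((N`!)%:R / ((i`! * (N - 2 * i)`!)%:R)) / (\prod_(1 <= j < i.+1) ((m + N - j)%:R : F)).
Definition Hf (F : fieldType) (n m j k : nat) : F :=
  if k is k'.+1 then (n`!)%:R / (((n - 2 * j)`! * j`!)%:R) * (-1) ^+ k * ('C(j.-1, k'))%:R
     * ((n + m - k - j)`!)%:R / ((n + m - k)`!)%:R else 0.

Lemma natf_eq0 (F : fieldType) (HF : [pchar F] =i pred0) n : (n%:R == 0 :> F) = (n == 0)%N.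
Proof. by move/pcharf0P: HF. Qed.

Lemma natrDr (F : fieldType) (a b : nat) : a%:R + b%:R = (a + b)%:R :> F.
Proof. by rewrite natrD. Qed.
Lemma nat2r (F : fieldType) (n : nat) : 2 + n%:R = n.+2%:R :> F.
Proof. by rewrite natrDr add2n. Qed.

Lemma natrMr (F : fieldType) (a b : nat) : a%:R * b%:R = (a * b)%:R :> F.
Proof. by rewrite natrM. Qed.

Lemma binf (F : fieldType) (HF : [pchar F] =i pred0) (x y : nat) : (y <= x)%N ->
  ('C(x, y))%:R = (x`!)%:R / ((y`!)%:R * ((x - y)`!)%:R) :> F.
Proof.
move=> h; rewrite -(bin_fact h) !natrM mulfK // mulf_neq0 // natf_eq0 // -lt0n fact_gt0 //.

Qed.

Lemma prodP (F : fieldType) (a i : nat) :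
  \prod_(1 <= t < i.+1) ((a.+1 + i - t)%:R : F) * (a`!)%:R = ((a + i)`!)%:R.
Proof.
elim: i => [|i IH]; first by rewrite big_geq // mul1r addn0.
rewrite big_nat_recl // -mulrA.
have -> : \prod_(1 <= t < i.+1) ((a.+1 + i.+1 - t.+1)%:R : F) = \prod_(1 <= t < i.+1) ((a.+1 + i - t)%:R : F).
  by apply: eq_bigr => t _; rewrite addnS subSS.
rewrite IH (addnS a i) factS natrM; congr (_ * _); congr (_%:R); lia.
Qed.

Lemma keyD (F : fieldType) (HF : [pchar F] =i pred0) (n m j k : nat) :
  (0 < j)%N -> (2 * j <= n)%N -> (k <= j)%N ->
  bet F n m k * (-1) ^+ k * alp F m (n - 2 * k) (j - k) = Hf F n m j k - Hf F n m j k.+1.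
Proof.
move=> j0 hjn hkj.
have [r hr] : exists r, n = (r + 2 * j)%N by exists (n - 2*j)%N; lia.
have [i hi] : exists i, j = (k + i)%N by exists (j-k)%N; lia.
rewrite /bet /alp /Hf.
have -> : (n - 2 * k = r + 2 * i)%N by lia.
have -> : (j - k = i)%N by lia.
have -> : (r + 2 * i - 2 * i = r)%N by lia.
have -> : (n - 2 * j = r)%N by lia.
case: k hi hkj => [|k'] hi hkj; case: i hi => [|i'] hi.
- lia.
- rewrite add0n in hi; subst j.
  rewrite fact0 expr0 expr1 bin0 /=.
  have -> : (n + m - 2*0 = (r+m+i' + i'.+1).+1)%N by lia.
  have ? : (n + m - 0 = (r+m+i' + i'.+1).+1)%N by lia.
  have -> : (n + m - 1 - i'.+1 = r+m+i')%N by lia.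
  have -> : (n + m - 1 = r+m+i' + i'.+1)%N by lia.
  have -> : (m + (r + 2 * i'.+1) = (r+m+i').+1 + i'.+1)%N by lia.
  have hP := prodP F (r+m+i') i'.+1.
  set P := \prod_(_ <= _ < _) _ in hP *.
  have hf : forall x, (x`!%:R : F) != 0 by move=> x; rewrite natf_eq0 // -lt0n fact_gt0.
  have -> : P = ((r + m + i' + i'.+1)`!)%:R / ((r+m+i')`!)%:R by rewrite -hP mulfK.
  rewrite factS !natrM.
  field.
  by repeat (apply/andP; split); first [exact: hf | exact: oner_neq0 | rewrite ?(natrDr, nat1r, natr1, nat2r) (@natf_eq0 F HF)].
- rewrite addn0 in hi; subst j.
  rewrite /= binn bin_small // big_geq // !muln0 !addn0 fact0.
  have -> : (n + m - 2 * k'.+1 = r + m)%N by lia.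
  have -> : (n + m - k'.+1 - k'.+1 = r + m)%N by lia.
  have -> : (n + m - k'.+1 = r + m + k'.+1)%N by lia.
  have hf : forall x, (x`!%:R : F) != 0 by move=> x; rewrite natf_eq0 // -lt0n fact_gt0.
  rewrite !natrM.
  field.
  by repeat (apply/andP; split); first [exact: hf | exact: oner_neq0 | rewrite ?(natrDr, nat1r, natr1, nat2r) (@natf_eq0 F HF)].
- subst j.
  have hf : forall x, (x`!%:R : F) != 0 by move=> x; rewrite natf_eq0 // -lt0n fact_gt0.
  have -> : (k'.+1 + i'.+1).-1 = (k' + i').+1 by rewrite addnS addSn.
  have b1 : (k' <= (k'+i').+1)%N by lia.
  have b2 : (k'.+1 <= (k'+i').+1)%N by lia.
  rewrite (@binf F HF _ _ b1) (@binf F HF _ _ b2).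
  have -> : ((k' + i').+1 - k' = i'.+1)%N by lia.
  have -> : ((k' + i').+1 - k'.+1 = i')%N by lia.
  have -> : (k'.+1 + i'.+1 = (k' + i').+2)%N by lia.
  have -> : (n + m - 2 * k'.+1 = (r+m+i' + i'.+1).+1)%N by lia.
  have -> : (n + m - k'.+1 - (k' + i').+2 = (r+m+i').+1)%N by lia.
  have -> : (n + m - k'.+2 - (k' + i').+2 = (r+m+i'))%N by lia.
  have -> : (n + m - k'.+1 = (r+m+i' + (k'+i').+2).+1)%N by lia.
  have -> : (n + m - k'.+2 = (r+m+i' + (k'+i').+2))%N by lia.
  have -> : (m + (r + 2 * i'.+1) = (r+m+i').+1 + i'.+1)%N by lia.
  have hP := prodP F (r+m+i') i'.+1.
  set P := \prod_(_ <= _ < _) _ in hP *.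
  have -> : P = ((r + m + i' + i'.+1)`!)%:R / ((r+m+i')`!)%:R by rewrite -hP mulfK.
  rewrite !factS !natrM !exprS.
  field.
  by repeat (apply/andP; split); first [exact: hf | exact: oner_neq0 | rewrite ?(natrDr, nat1r, natr1, nat2r) (@natf_eq0 F HF)].
Qed.

Lemma half_le (n k : nat) : (k < n./2.+1)%N = (2 * k <= n)%N.
Proof.
have h := odd_double_half n; rewrite -muln2 in h.
case: (odd n) h => /= h; apply/idP/idP => H; lia.
Qed.

Lemma pick_sum (F : fieldType) (B t : nat) (f : nat -> F) (P : nat -> bool) :
  (t < B)%N -> (forall i, (i < B)%N -> P i = (i == t)) ->
  \sum_(i < B) f i * (P i)%:R = f t.
Proof.
move=> ht hP; rewrite (bigD1 (Ordinal ht)) //= big1 => [|i hi].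
  by rewrite hP // eqxx mulr1 addr0.
rewrite hP // (_ : (i == t :> nat) = false) ?mulr0 //.
by apply/negbTE; apply: contra hi => /eqP h; apply/eqP; apply: val_inj.
Qed.

Lemma lcoef (F : fieldType) (m N d : nat) (s : F) :
  (lpoly m N s)`_d = \sum_(i < N./2.+1) (alp F m N i * s ^+ i) * (d == (N - 2 * i)%N)%:R.
Proof. by rewrite /lpoly coef_sum; apply: eq_bigr => i _; rewrite coefZ coefXn. Qed.

Lemma part1 (F : fieldType) (HF : [pchar F] =i pred0) (s : F) (m n : nat) :
     'X^n = \sum_(k < n./2.+1)
              (((n`!)%:R / ((k`! * (n - 2 * k)`!)%:R))
                 * (((n + m - 2 * k)`!)%:R / ((n + m - k)`!)%:R)
                 * (- s) ^+ k) *: lpoly m (n - 2 * k) s.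
Proof.
apply/polyP => d; rewrite coefXn coef_sum.
under eq_bigr => k _ do rewrite coefZ lcoef.
have hzero : (forall k i, (2 * k <= n)%N -> (2 * i <= n - 2 * k)%N -> d != (n - 2 * k - 2 * i)%N) ->
   (d == n)%:R = \sum_(k < n./2.+1) (((n`!)%:R / ((k`! * (n - 2 * k)`!)%:R))
                 * (((n + m - 2 * k)`!)%:R / ((n + m - k)`!)%:R)
                 * (- s) ^+ k) * \sum_(i < (n - 2 * k)./2.+1) (alp F m (n - 2 * k) i * s ^+ i) * (d == (n - 2 * k - 2 * i)%N)%:R.
  move=> H; rewrite big1 => [|k _]; last first.
    rewrite big1 ?mulr0 // => i _; rewrite (negbTE (H _ _ _ _)) ?mulr0 //; rewrite -half_le //.
  have h0 : d != n by have := H 0%N 0%N; rewrite !muln0 !subn0; apply; lia.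
  by rewrite (negbTE h0).
case: (leqP d n) => hdn; last first.
  by apply: hzero => k i _ _; apply/eqP; lia.
have hodd := odd_double_half (n - d); rewrite -muln2 in hodd.
case: (boolP (odd (n - d))) => hod.
  apply: hzero => k i hk hi; apply/eqP => hd.
  have : (n - d = 2 * (k + i))%N by lia.
  by move=> e; move: hod; rewrite e oddM.
rewrite (negbTE hod) /= in hodd.
set j := (n - d)./2 in hodd.
have hd : d = (n - 2 * j)%N by lia.
have hjn : (2 * j <= n)%N by lia.
clearbody j; subst d.
under eq_bigr => k _.
  have hk2 := ltn_ord k; rewrite half_le in hk2.
  have -> : \sum_(i < (n - 2 * k)./2.+1) (alp F m (n - 2 * k) i * s ^+ i) * ((n - 2 * j)%N == (n - 2 * k - 2 * i)%N)%:R
     = if (k < j.+1)%N then alp F m (n - 2 * k) (j - k) * s ^+ (j - k) else 0.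
    case: (ltnP k j.+1) => hkj.
      apply: (@pick_sum F _ (j - k) (fun i => alp F m (n - 2 * k) i * s ^+ i) (fun i => (n - 2 * j)%N == (n - 2 * k - 2 * i)%N)); first by rewrite half_le; lia.
      by move=> i; rewrite half_le => hi; apply/eqP/eqP; lia.
    rewrite big1 // => i _; rewrite (_ : (_ == _) = false) ?mulr0 //.
    by apply/negbTE/eqP; lia.
  rewrite (fun_if ( *%R _)) mulr0.
over.

rewrite -big_mkcond /= -(big_ord_widen _ (fun k : nat => n`!%:R / (k`! * (n - 2 * k)`!)%:R *
       ((n + m - 2 * k)`!%:R / (n + m - k)`!%:R) * (- s) ^+ k * (alp F m (n - 2 * k) (j - k) * s ^+ (j - k)))); last by rewrite half_le.

have hf : forall x, (x`!%:R : F) != 0 by move=> x; rewrite natf_eq0 // -lt0n fact_gt0.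
have [->|j0] := eqVneq j 0%N.
  rewrite big_ord1 /= /alp big_geq // !muln0 !subn0 !expr0 eqxx fact0 !mul1n.
  by rewrite !divff ?oner_neq0 // !mul1r.
have j0' : (0 < j)%N by rewrite lt0n.
rewrite (_ : ((n - 2*j)%N == n) = false); last by apply/negbTE/eqP; lia.
transitivity (\sum_(i < j.+1) (Hf F n m j i - Hf F n m j i.+1) * s ^+ j).
  rewrite -mulr_suml -(big_mkord xpredT (fun i => Hf F n m j i - Hf F n m j i.+1)).
  rewrite (@telescope_sumr_eq _ 0%N j.+1 (fun k => - Hf F n m j k)) //; last first.
    by move=> k _; rewrite opprK addrC.
  rewrite /= bin_small; last by lia.
  by rewrite !(mulr0, mul0r, oppr0, subr0).
apply: eq_bigr => k _; have hk := ltn_ord k; rewrite ltnS in hk.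
have e : s ^+ j = s ^+ k * s ^+ (j - k) by rewrite -exprD subnKC.
rewrite -keyD // /bet e [(- s) ^+ _]exprNn.
ring.
Qed.

Theorem mainTheorem4 (F : fieldType) (HF : [pchar F] =i pred0) (s : F) :
  (forall m n : nat,
     'X^n = \sum_(k < n./2.+1)
              (((n`!)%:R / ((k`! * (n - 2 * k)`!)%:R))
                 * (((n + m - 2 * k)`!)%:R / ((n + m - k)`!)%:R)
                 * (- s) ^+ k) *: lpoly m (n - 2 * k) s)
  /\
  (forall (m : nat) (L : {poly F} -> F),
     (forall p q, L (p + q) = L p + L q) ->
     (forall (c : F) p, L (c *: p) = c * L p) ->
     (forall n : nat, L (lpoly m n s) = (n == 0%N)%:R) ->
     forall n : nat,
       L 'X^(2 * n + 1) = 0 /\ L 'X^(2 * n) = (- s) ^+ n * sigmaSC F m n).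
Proof.
split; first exact: @part1 F HF s.
move=> m L Ladd Lscale Ll n.
have L0 : L 0 = 0.
  by apply: (addrI (L 0)); rewrite -Ladd !addr0.
have Lsum : forall N, L 'X^N = \sum_(k < N./2.+1)
              (((N`!)%:R / ((k`! * (N - 2 * k)`!)%:R))
                 * (((N + m - 2 * k)`!)%:R / ((N + m - k)`!)%:R)
                 * (- s) ^+ k) * ((N - 2 * k)%N == 0%N)%:R.
  move=> N; rewrite {1}(@part1 F HF s m N) (big_morph L Ladd L0).
  by apply: eq_bigr => k _; rewrite Lscale Ll.
split.
  rewrite Lsum big1 // => k _; have hk := ltn_ord k; rewrite half_le in hk.
  by rewrite (_ : (_ == _) = false) ?mulr0 //; apply/negbTE; lia.
rewrite Lsum (@pick_sum F _ n (fun k => (((2 * n)`!)%:R / ((k`! * (2 * n - 2 * k)`!)%:R))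
                 * ((((2 * n) + m - 2 * k)`!)%:R / (((2 * n) + m - k)`!)%:R)
                 * (- s) ^+ k) (fun k => ((2 * n - 2 * k)%N == 0%N))); last first.
- by move=> i; rewrite half_le => hi; apply/eqP/eqP; lia.
- by rewrite half_le.
rewrite subnn fact0 muln1.
have -> : (2 * n + m - 2 * n = m)%N by lia.
have -> : (2 * n + m - n = n + m)%N by lia.
have hf : forall x, (x`!%:R : F) != 0 by move=> x; rewrite natf_eq0 // -lt0n fact_gt0.
rewrite /sigmaSC !natrM.
field.
by repeat (apply/andP; split); first [exact: hf | exact: oner_neq0].
Qed.
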